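(* Let $\alpha,\beta,\gamma\in\mathbf S^2$ and put $A=\mathcal R_\gamma^\pi\circ\mathcal R_\beta^\pi\circ\mathcal R_\alpha^\pi$ and $B=\mathcal R_\alpha^\pi\circ\mathcal R_\gamma^\pi\circ\mathcal R_\beta^\pi$. Suppose $A$ is not the identity. Then $A$ and $B$ have the same axis of rotation if and only if one of the following holds: (i) $\mathbf R\beta=\mathbf R\gamma$; (ii) $\langle\gamma,\beta\rangle_E=0$ and $\det_3(\alpha\beta\gamma)^2\neq1$; (iii) $\langle\alpha,\beta\rangle_E=0=\langle\alpha,\gamma\rangle_E$ and $\langle\gamma,\beta\rangle_E\neq0$. Moreover, if $b\in\mathbf S^2$ lies on this common axis and one sets $c=\mathcal R_\alpha^\pi(b)$ and $a=\mathcal R_\gamma^\pi(b)$, then in case (i) $b=c=\pm\alpha$; in case (ii) $c=-b$; and in case (iii) $-a=b=c=\pm\alpha$.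
   Context: For a nonzero $v\in\mathbf R^3$ and $\phi\in\mathbf R$, $\mathcal R_v^\phi$ denotes the rotation of $\mathbf R^3$ by angle $\phi$ about the axis $\mathbf Rv$; $\mathcal R_v^\pi$ is the half-turn about $\mathbf Rv$. $\langle\cdot,\cdot\rangle_E$ is the Euclidean inner product, $\mathbf S^2$ the unit sphere, $\det_3(\alpha\beta\gamma)$ the determinant with columns $\alpha,\beta,\gamma$. The axis of a rotation different from the identity is its (one-dimensional) fixed line. *)

(* Defs.v *)
From Stdlib Require Import Reals Lra.
Open Scope R_scope.

Record vec3 : Type := V3 { v1 : R; v2 : R; v3 : R }.

Definition vadd (u w : vec3) : vec3 := V3 (v1 u + v1 w) (v2 u + v2 w) (v3 u + v3 w).
Definition vscale (t : R) (u : vec3) : vec3 := V3 (t * v1 u) (t * v2 u) (t * v3 u).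
Definition vopp (u : vec3) : vec3 := vscale (-1) u.

Definition dotE (u w : vec3) : R := v1 u * v1 w + v2 u * v2 w + v3 u * v3 w.

Definition on_S2 (u : vec3) : Prop := dotE u u = 1.

Definition det3 (a b c : vec3) : R :=
  v1 a * (v2 b * v3 c - v3 b * v2 c)
  - v1 b * (v2 a * v3 c - v3 a * v2 c)
  + v1 c * (v2 a * v3 b - v3 a * v2 b).

Definition on_line (v x : vec3) : Prop := exists t : R, x = vscale t v.
Definition same_line (u w : vec3) : Prop := forall x, on_line u x <-> on_line w x.

(* Half-turn R_v^pi about the axis R v, for v a unit vector:
   x |-> 2 <v,x> v - x  (rotation by pi about R v). *)
Definition halfturn (v : vec3) (x : vec3) : vec3 :=
  vadd (vscale (2 * dotE v x) v) (vopp x).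

(* Two rotations (different from the identity) have the same axis iff their
   fixed lines coincide. *)
Definition same_axis (f g : vec3 -> vec3) : Prop :=
  forall x, f x = x <-> g x = x.

(* Main.v *)
Require Import Defs.
From Stdlib Require Import Reals Lra Psatz.
Open Scope R_scope.

Definition cross u w := V3 (v2 u * v3 w - v3 u * v2 w) (v3 u * v1 w - v1 u * v3 w) (v1 u * v2 w - v2 u * v1 w).
Definition H' u x := vadd (vscale (2 * dotE u x) u) (vscale (- dotE u u) x).
Definition rod s v x := vadd (vadd (vscale (s^2 - dotE v v) x) (vscale (2*dotE v x) v)) (vscale (2*s) (cross v x)).
Definition qs a b c := - dotE (cross c b) a.
Definition qv a b c := vadd (vscale (- dotE c b) a) (cross (cross c b) a).

Ltac vring := repeat match goal with v : vec3 |- _ =>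
    let p := fresh "p" in let q := fresh "q" in let r := fresh "r" in destruct v as [p q r] end;
  unfold halfturn, H', rod, qs, qv, det3, cross, vopp, vadd, vscale, dotE; simpl; lazymatch goal with |- @eq vec3 _ _ => f_equal | _ => idtac end; ring.

Lemma rod_id a b c x: H' c (H' b (H' a x)) = rod (qs a b c) (qv a b c) x.
Proof. vring. Qed.
Lemma norm_id a b c : (qs a b c)^2 + dotE (qv a b c) (qv a b c) = dotE a a * dotE b b * dotE c c.
Proof. vring. Qed.
Lemma ht_H' u x : dotE u u = 1 -> halfturn u x = H' u x.
Proof. intro h. unfold H'. rewrite h. vring. Qed.
Lemma H'H' u x : H' u (H' u x) = vscale (dotE u u ^ 2) x.
Proof. vring. Qed.
Lemma vscale1 w : vscale 1 w = w.
Proof. vring. Qed.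
Lemma ht_inv u x : dotE u u = 1 -> halfturn u (halfturn u x) = x.
Proof. intro h. rewrite !ht_H' by exact h. rewrite H'H', h. replace (1^2) with 1 by ring. apply vscale1. Qed.
Lemma ht_scale u t w : halfturn u (vscale t w) = vscale t (halfturn u w).
Proof. vring. Qed.
Lemma vscale_vscale t m w : vscale t (vscale m w) = vscale (t*m) w.
Proof. vring. Qed.
Lemma vopp_scale w : vopp w = vscale (-1) w.
Proof. reflexivity. Qed.
Lemma vopp_vopp w : vopp (vopp w) = w.
Proof. vring. Qed.
Lemma dot_scale a t w : dotE a (vscale t w) = t * dotE a w.
Proof. vring. Qed.
Lemma dot_comm a b : dotE a b = dotE b a.
Proof. vring. Qed.
Lemma dot_a_v a b c : dotE a (qv a b c) = - dotE c b * dotE a a.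
Proof. vring. Qed.
Lemma cross_a_v a b c : cross a (qv a b c) = vadd (vscale (dotE a a) (cross c b)) (vscale (- dotE a (cross c b)) a).
Proof. vring. Qed.
Lemma det_qs a b c : det3 a b c = qs a b c.
Proof. vring. Qed.
Lemma cross_dot1 c b : dotE (cross c b) b = 0.
Proof. vring. Qed.
Lemma cross_dot2 c b : dotE (cross c b) c = 0.
Proof. vring. Qed.
Lemma cross_scale_self a m : cross a (vscale m a) = V3 0 0 0.
Proof. vring. Qed.

Lemma par_of_cross a w : dotE a a = 1 -> cross a w = V3 0 0 0 -> w = vscale (dotE a w) a.
Proof.
  intros h1 h2.
  assert (I : cross (cross a w) a = vadd (vscale (dotE a a) w) (vscale (- dotE a w) a)) by vring.
  rewrite h1, h2 in I. destruct a, w. unfold cross, vadd, vscale, dotE in *; simpl in *.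
  injection I as I1 I2 I3. f_equal; lra.
Qed.
Lemma perp_ht a w : dotE a w = 0 -> halfturn a w = vopp w.
Proof. intro h. unfold halfturn. rewrite h. vring. Qed.
Lemma par_ht a t : dotE a a = 1 -> halfturn a (vscale t a) = vscale t a.
Proof. intro h. unfold halfturn. rewrite dot_scale, h. vring. Qed.
Lemma unit_pm a b m : dotE a a = 1 -> dotE b b = 1 -> b = vscale m a -> b = a \/ b = vopp a.
Proof.
  intros ha hb ->. rewrite dot_scale, dot_comm, dot_scale, ha in hb.
  assert (m = 1 \/ m = -1) as [->| ->] by nra.
  - left. apply vscale1.
  - right. reflexivity.
Qed.
Lemma iii_cross a b c : dotE a a = 1 -> dotE a b = 0 -> dotE a c = 0 ->
  cross c b = vscale (dotE a (cross c b)) a.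
Proof.
  intros h1 h2 h3.
  assert (I : vscale (dotE a a) (cross c b) = vadd (vscale (dotE a (cross c b)) a)
     (cross (vadd (vscale (dotE a b) c) (vscale (- dotE a c) b)) a)) by vring.
  rewrite h1, h2, h3 in I. revert I. generalize (dotE a (cross c b)). intros k I.
  destruct a, b, c. unfold cross, vadd, vscale in *; simpl in *.
  injection I as I1 I2 I3. f_equal; lra.
Qed.
Lemma qv_par a b c k : cross c b = vscale k a -> qv a b c = vscale (- dotE c b) a.
Proof. intro h. unfold qv. rewrite h. vring. Qed.
Lemma same_line_cross b c : dotE b b = 1 -> dotE c c = 1 -> same_line b c -> cross c b = V3 0 0 0.
Proof.
  intros hb hc hl. destruct (proj2 (hl c)) as [t ->].
  - exists 1. symmetry. apply vscale1.
  - vring.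
Qed.
Lemma cross_same_line b c : dotE b b = 1 -> dotE c c = 1 -> cross c b = V3 0 0 0 -> same_line b c.
Proof.
  intros hb hc h.
  assert (h' : cross b c = V3 0 0 0).
  { assert (cross b c = vscale (-1) (cross c b)) as -> by vring. rewrite h. vring. }
  pose proof (par_of_cross _ _ hc h) as Eb. pose proof (par_of_cross _ _ hb h') as Ec.
  intro x. split; intros [t ->].
  - exists (t * dotE c b). rewrite Eb at 1. apply vscale_vscale.
  - exists (t * dotE b c). rewrite Ec at 1. apply vscale_vscale.
Qed.
Lemma cross0_scale a : V3 0 0 0 = vscale 0 a.
Proof. vring. Qed.
Lemma pos_norm v : v <> V3 0 0 0 -> 0 < dotE v v.
Proof.
  intro hv. destruct v as [p q r]. unfold dotE; simpl.
  destruct (Req_dec p 0); [destruct (Req_dec q 0); [destruct (Req_dec r 0)|]|].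
  - subst; exfalso; apply hv; reflexivity.
  - nra.
  - nra.
  - nra.
Qed.
Lemma rod0 s v x : s^2 + dotE v v = 1 -> v = V3 0 0 0 -> rod s v x = x.
Proof.
  intros hn ->. unfold dotE in hn; simpl in hn.
  assert (hs : s^2 = 1) by lra. unfold rod. rewrite hs. vring.
Qed.
Lemma ht_scale_cross a w t : dotE a w <> 0 -> halfturn a w = vscale t w -> cross a w = V3 0 0 0.
Proof.
  intros hd h. remember (dotE a w) as d.
  destruct a as [a1 a2 a3], w as [w1 w2 w3]. unfold halfturn, vadd, vscale, vopp in h; simpl in h.
  rewrite <- Heqd in h. injection h as E1 E2 E3.
  assert (F1 : 2*d*a1 = (1+t)*w1) by lra.
  assert (F2 : 2*d*a2 = (1+t)*w2) by lra.
  assert (F3 : 2*d*a3 = (1+t)*w3) by lra.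
  assert (G : forall u, 2*d*u = 0 -> u = 0).
  { intros u hu. destruct (Rmult_integral _ _ hu) as [h0|h0]; [lra|exact h0]. }
  unfold cross; simpl. f_equal; apply G.
  - replace (2*d*(a2*w3 - a3*w2)) with ((2*d*a2)*w3 - (2*d*a3)*w2) by ring. rewrite F2, F3. ring.
  - replace (2*d*(a3*w1 - a1*w3)) with ((2*d*a3)*w1 - (2*d*a1)*w3) by ring. rewrite F1, F3. ring.
  - replace (2*d*(a1*w2 - a2*w1)) with ((2*d*a1)*w2 - (2*d*a2)*w1) by ring. rewrite F1, F2. ring.
Qed.
Lemma lin_sol x y k : vadd (vscale 1 x) (vscale (- k) y) = V3 0 0 0 -> x = vscale k y.
Proof.
  intro h. destruct x, y. unfold vadd, vscale in *; simpl in *. injection h as h1 h2 h3. f_equal; lra.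
Qed.

Lemma fix_iff s v (hn: s^2 + dotE v v = 1) (hv: v <> V3 0 0 0) x :
  rod s v x = x <-> on_line v x.
Proof.
  assert (hs : s^2 = 1 - dotE v v) by lra.
  split.
  - intro E. unfold rod in E. rewrite hs in E.
    destruct v as [p q r], x as [a b c]. unfold dotE, cross, vadd, vscale in *; simpl in *.
    injection E as E1 E2 E3.
    assert (hn0 : p*p+q*q+r*r <> 0).
    { intro Z. apply hv. assert (p = 0) by nra. assert (q = 0) by nra. assert (r = 0) by nra. subst; reflexivity. }
    set (d := p*a+q*b+r*c) in *.

    assert (P1 : a*((1 - (p * p + q * q + r * r) - (p * p + q * q + r * r)) * a + 2 * d * p + 2 * s * (q * c - r * b)) = a*a) by (rewrite E1; reflexivity).
    assert (P2 : b*((1 - (p * p + q * q + r * r) - (p * p + q * q + r * r)) * b + 2 * d * q + 2 * s * (r * a - p * c)) = b*b) by (rewrite E2; reflexivity).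
    assert (P3 : c*((1 - (p * p + q * q + r * r) - (p * p + q * q + r * r)) * c + 2 * d * r + 2 * s * (p * b - q * a)) = c*c) by (rewrite E3; reflexivity).
    assert (K : (p*p+q*q+r*r)*(a*a+b*b+c*c) - d*d = 0) by (unfold d in *; lra).
    assert (L : (q*c-r*b)^2 + (r*a-p*c)^2 + (p*b-q*a)^2 = 0) by (unfold d in K; nra).
    assert (S1 := pow2_ge_0 (q*c-r*b)). assert (S2 := pow2_ge_0 (r*a-p*c)). assert (S3 := pow2_ge_0 (p*b-q*a)).
    assert (C1 : q*c-r*b = 0) by (assert (T : (q*c-r*b)*(q*c-r*b) = 0) by lra; destruct (Rmult_integral _ _ T); assumption).
    assert (C2 : r*a-p*c = 0) by (assert (T : (r*a-p*c)*(r*a-p*c) = 0) by lra; destruct (Rmult_integral _ _ T); assumption).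
    assert (C3 : p*b-q*a = 0) by (assert (T : (p*b-q*a)*(p*b-q*a) = 0) by lra; destruct (Rmult_integral _ _ T); assumption).
    exists (d / (p*p+q*q+r*r)). unfold vscale; simpl.
    f_equal; unfold d; field_simplify_eq; try exact hn0; nra.
  - intros [t ->]. unfold rod. rewrite hs.
    destruct v as [p q r]. unfold dotE, cross, vadd, vscale; simpl. f_equal; ring.
Qed.

Theorem mainTheorem6 (alpha beta gamma : vec3)
  (ha : on_S2 alpha) (hb : on_S2 beta) (hc : on_S2 gamma)
  (hA : exists x, halfturn gamma (halfturn beta (halfturn alpha x)) <> x) :
  let A := fun x => halfturn gamma (halfturn beta (halfturn alpha x)) in
  let B := fun x => halfturn alpha (halfturn gamma (halfturn beta x)) in
  let case_i := same_line beta gamma in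
  let case_ii := dotE gamma beta = 0 /\ (det3 alpha beta gamma) ^ 2 <> 1 in
  let case_iii := dotE alpha beta = 0 /\ dotE alpha gamma = 0
                  /\ dotE gamma beta <> 0 in
  (same_axis A B <-> case_i \/ case_ii \/ case_iii) /\
  (forall b : vec3, on_S2 b -> A b = b ->
     let c := halfturn alpha b in
     let a := halfturn gamma b in
     (case_i -> b = c /\ (b = alpha \/ b = vopp alpha)) /\
     (case_ii -> c = vopp b) /\
     (case_iii -> vopp a = b /\ b = c /\ (b = alpha \/ b = vopp alpha))).
Proof.
  intros A B case_i case_ii case_iii.
  unfold on_S2 in ha, hb, hc.
  set (s := qs alpha beta gamma). set (v := qv alpha beta gamma).
  assert (HA : forall x, A x = rod s v x).
  { intro x. subst A. simpl. rewrite !ht_H' by assumption. apply rod_id. }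
  assert (Hn : s^2 + dotE v v = 1).
  { subst s v. rewrite norm_id, ha, hb, hc. ring. }
  assert (Hv : v <> V3 0 0 0).
  { intro Hv0. destruct hA as [x hx]. apply hx. change (A x = x). rewrite HA. apply rod0; assumption. }
  assert (Hfix : forall x, A x = x <-> on_line v x).
  { intro x. rewrite HA. apply fix_iff; assumption. }
  assert (HB : forall x, B x = halfturn alpha (A (halfturn alpha x))).
  { intro x. subst A B. simpl. rewrite ht_inv by assumption. reflexivity. }
  assert (Hdav : dotE alpha v = - dotE gamma beta).
  { subst v. rewrite dot_a_v, ha. ring. }
  assert (Hcav : cross alpha v = vadd (vscale 1 (cross gamma beta)) (vscale (- dotE alpha (cross gamma beta)) alpha)).
  { subst v. rewrite cross_a_v, ha. reflexivity. }
  assert (Pk : forall k, cross gamma beta = vscale k alpha -> cross alpha v = V3 0 0 0).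
  { intros k hk. subst v. rewrite (qv_par _ _ _ _ hk). apply cross_scale_self. }
  assert (Psame : dotE gamma beta = 0 \/ cross alpha v = V3 0 0 0 -> same_axis A B).
  { intro P.
    assert (hm : exists m, halfturn alpha v = vscale m v).
    { destruct P as [P|P].
      - exists (-1). apply perp_ht. lra.
      - exists 1. rewrite (par_of_cross _ _ ha P). rewrite par_ht by assumption.
        rewrite <- (par_of_cross _ _ ha P). symmetry. apply vscale1. }
    destruct hm as [m hm].
    intro x. rewrite HB, Hfix. split.
    - intros [t ->].
      assert (E : A (halfturn alpha (vscale t v)) = halfturn alpha (vscale t v)).
      { apply Hfix. rewrite ht_scale, hm, vscale_vscale. eexists; reflexivity. }
      rewrite E. apply ht_inv; assumption.
    - intro E.
      assert (E2 : A (halfturn alpha x) = halfturn alpha x).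
      { rewrite <- (ht_inv alpha (A (halfturn alpha x))) by assumption. rewrite E. reflexivity. }
      apply Hfix in E2. destruct E2 as [t Et].
      exists (t * m). rewrite <- (ht_inv alpha x) by assumption. rewrite Et, ht_scale, hm.
      apply vscale_vscale. }
  split.
  - split.
    + intro hs.
      assert (hHv : A (halfturn alpha v) = halfturn alpha v).
      { apply hs. rewrite HB, ht_inv by assumption.
        assert (Av : A v = v) by (apply Hfix; exists 1; symmetry; apply vscale1).
        rewrite Av. reflexivity. }
      apply Hfix in hHv. destruct hHv as [t ht].
      destruct (Req_dec (dotE gamma beta) 0) as [h0|h0].
      * right; left. split; [exact h0|].
        rewrite det_qs. fold s. pose proof (pos_norm _ Hv). lra.
      * assert (hd : dotE alpha v <> 0) by lra.
        pose proof (ht_scale_cross _ _ _ hd ht) as hcr.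
        rewrite Hcav in hcr. apply lin_sol in hcr.
        destruct (Req_dec (dotE alpha (cross gamma beta)) 0) as [k0|k0].
        -- left. apply cross_same_line; try assumption. rewrite hcr, k0. vring.
        -- right; right. split; [|split; [|exact h0]].
           ++ assert (Z := cross_dot1 gamma beta). rewrite hcr, dot_comm, dot_scale in Z.
              destruct (Rmult_integral _ _ Z); [contradiction|]. rewrite dot_comm; assumption.
           ++ assert (Z := cross_dot2 gamma beta). rewrite hcr, dot_comm, dot_scale in Z.
              destruct (Rmult_integral _ _ Z); [contradiction|]. rewrite dot_comm; assumption.
    + intros [hi|[hii|hiii]]; apply Psame.
      * right. apply (Pk 0). rewrite (same_line_cross _ _ hb hc hi). apply cross0_scale.
      * left. apply hii.
      * right. destruct hiii as [h1 [h2 h3]]. apply (Pk _ (iii_cross _ _ _ ha h1 h2)).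
  - intros b hbS hAb c a. apply Hfix in hAb. destruct hAb as [t ->]. subst c a.
    split; [|split].
    + intro hi. assert (hk : cross gamma beta = vscale 0 alpha).
      { rewrite (same_line_cross _ _ hb hc hi). apply cross0_scale. }
      subst v. rewrite (qv_par _ _ _ _ hk), vscale_vscale in *.
      rewrite par_ht by assumption. split; [reflexivity|].
      eapply unit_pm; [exact ha|exact hbS|reflexivity].
    + intro hii. apply perp_ht. rewrite dot_scale, Hdav. destruct hii as [-> _]. ring.
    + intros [h1 [h2 h3]]. pose proof (iii_cross _ _ _ ha h1 h2) as hk.
      subst v. rewrite (qv_par _ _ _ _ hk), vscale_vscale in *.
      rewrite par_ht by assumption.
      split; [|split; [reflexivity|]].
      * rewrite perp_ht. apply vopp_vopp. rewrite dot_scale, (dot_comm gamma alpha), h2. ring.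
      * eapply unit_pm; [exact ha|exact hbS|reflexivity].
Qed.
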